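(* Let $S$ be a semilattice. Then the Banach algebra $\ell^1(S)$ is AMNM.
   Context: A semilattice is a commutative semigroup in which every element is idempotent. $\ell^1(S)$ is the Banach space of functions $a:S\to\mathbb C$ with $\|a\|=\sum_{s\in S}|a(s)|<\infty$, made into a Banach algebra by convolution, i.e. the bilinear extension of $\delta_x*\delta_y=\delta_{xy}$. For Banach algebras $A,B$ and a bounded linear map $T:A\to B$, the multiplicative defect is $\operatorname{def}(T)=\sup\{\|T(xy)-T(x)T(y)\|:\ x,y\in A,\ \|x\|\le1,\ \|y\|\le1\}$. $\operatorname{Mult}(A,B)$ denotes the set of bounded linear multiplicative maps $A\to B$ (including the zero map). A Banach algebra $A$ is called AMNM if for every $\varepsilon>0$ there is $\delta>0$ such that every $\psi\in A^*$ with $\operatorname{def}(\psi)\le\delta$ satisfies $\operatorname{dist}_{A^*}(\psi,\operatorname{Mult}(A,\mathbb C))\le\varepsilon$. *)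

(* Defs.v *)
From Stdlib Require Import Reals List ClassicalEpsilon.
Open Scope R_scope.

Record C : Type := mkC { re : R ; im : R }.
Definition C0 : C := mkC 0 0.
Definition Cadd (z w : C) : C := mkC (re z + re w) (im z + im w).
Definition Csub (z w : C) : C := mkC (re z - re w) (im z - im w).
Definition Cmul (z w : C) : C :=
  mkC (re z * re w - im z * im w) (re z * im w + im z * re w).
Definition Cmod (z : C) : R := sqrt (re z * re z + im z * im z).

Definition lsum {I : Type} (f : I -> C) (l : list I) : C :=
  fold_right (fun i acc => Cadd (f i) acc) C0 l.
Definition lsumR {I : Type} (f : I -> R) (l : list I) : R :=
  fold_right (fun i acc => f i + acc) 0 l.

(** Unordered summation of a family [f] indexed by [{i : I | P i}]:
    [v] is the limit of the net of finite partial sums. *)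
Definition has_sum {I : Type} (P : I -> Prop) (f : I -> C) (v : C) : Prop :=
  forall eps, 0 < eps ->
    exists F0 : list I, Forall P F0 /\
      forall F : list I, NoDup F -> Forall P F -> incl F0 F ->
        Cmod (Csub (lsum f F) v) <= eps.

Definition is_semilattice {S : Type} (op : S -> S -> S) : Prop :=
  (forall x y z, op x (op y z) = op (op x y) z) /\
  (forall x y, op x y = op y x) /\
  (forall x, op x x = x).

Definition l1_le {S : Type} (a : S -> C) (r : R) : Prop :=
  forall F : list S, NoDup F -> lsumR (fun s => Cmod (a s)) F <= r.
Definition in_l1 {S : Type} (a : S -> C) : Prop := exists r, l1_le a r.

Definition fadd {S : Type} (a b : S -> C) : S -> C := fun s => Cadd (a s) (b s).
Definition fscale {S : Type} (z : C) (a : S -> C) : S -> C := fun s => Cmul z (a s).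

(** Convolution: (a * b)(s) = sum_{(x,y) : x y = s} a(x) b(y)
    (the bilinear extension of delta_x * delta_y = delta_{xy}). *)
Definition conv {S : Type} (op : S -> S -> S) (a b : S -> C) : S -> C :=
  fun s => epsilon (inhabits C0)
    (fun v => has_sum (fun p : S * S => op (fst p) (snd p) = s)
                      (fun p => Cmul (a (fst p)) (b (snd p))) v).

(** * Functionals on ell^1(S) (only their values on ell^1(S) matter) *)
Definition is_linear_l1 {S : Type} (psi : (S -> C) -> C) : Prop :=
  (forall a b, in_l1 a -> in_l1 b -> psi (fadd a b) = Cadd (psi a) (psi b)) /\
  (forall z a, in_l1 a -> psi (fscale z a) = Cmul z (psi a)).

Definition is_bounded_l1 {S : Type} (psi : (S -> C) -> C) : Prop :=
  exists M, forall a, l1_le a 1 -> Cmod (psi a) <= M.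

Definition in_dual {S : Type} (psi : (S -> C) -> C) : Prop :=
  is_linear_l1 psi /\ is_bounded_l1 psi.

(** Mult(ell^1(S), C): bounded linear multiplicative functionals (incl. 0) *)
Definition is_mult {S : Type} (op : S -> S -> S) (phi : (S -> C) -> C) : Prop :=
  in_dual phi /\
  forall a b, in_l1 a -> in_l1 b -> phi (conv op a b) = Cmul (phi a) (phi b).

Definition defect_le {S : Type} (op : S -> S -> S) (psi : (S -> C) -> C) (delta : R) : Prop :=
  forall a b, l1_le a 1 -> l1_le b 1 ->
    Cmod (Csub (psi (conv op a b)) (Cmul (psi a) (psi b))) <= delta.

Definition dual_dist_le {S : Type} (psi phi : (S -> C) -> C) (c : R) : Prop :=
  forall a, l1_le a 1 -> Cmod (Csub (psi a) (phi a)) <= c.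

Definition dist_mult_le {S : Type} (op : S -> S -> S) (psi : (S -> C) -> C) (eps : R) : Prop :=
  forall eta, 0 < eta -> exists phi, is_mult op phi /\ dual_dist_le psi phi (eps + eta).

Definition l1_AMNM {S : Type} (op : S -> S -> S) : Prop :=
  forall eps, 0 < eps -> exists delta, 0 < delta /\
    forall psi, in_dual psi -> defect_le op psi delta -> dist_mult_le op psi eps.

(* Main.v *)
Require Import Defs.
From Stdlib Require Import Reals List ClassicalEpsilon.
From Stdlib Require Import Lra Psatz FunctionalExtensionality Classical.
From Coquelicot Require Complex.
Import Defs.
Open Scope R_scope.

Lemma C_ext z w : re z = re w -> im z = im w -> z = w.
Proof. destruct z, w; simpl; intros; subst; reflexivity. Qed.

Definition toC (z : C) : Complex.C := (re z, im z).
Lemma Cmod_toC z : Cmod z = Complex.Cmod (toC z).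
Proof. unfold Cmod, Complex.Cmod, toC; simpl. f_equal; ring. Qed.

Lemma Cmod_ge0 z : 0 <= Cmod z.
Proof. rewrite Cmod_toC; apply Complex.Cmod_ge_0. Qed.

Lemma Cmod_add z w : Cmod (Cadd z w) <= Cmod z + Cmod w.
Proof.
  rewrite !Cmod_toC.
  replace (toC (Cadd z w)) with (Complex.Cplus (toC z) (toC w)) by reflexivity.
  apply Complex.Cmod_triangle.
Qed.

Lemma Cmod_mul z w : Cmod (Cmul z w) = Cmod z * Cmod w.
Proof.
  rewrite !Cmod_toC.
  replace (toC (Cmul z w)) with (Complex.Cmult (toC z) (toC w)).
  apply Complex.Cmod_mult.
  unfold toC, Complex.Cmult; simpl. reflexivity.
Qed.

Lemma Cmod_re z : Rabs (re z) <= Cmod z.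
Proof. rewrite Cmod_toC. apply (Complex.re_le_Cmod (toC z)). Qed.
Lemma Cmod_im z : Rabs (im z) <= Cmod z.
Proof. rewrite Cmod_toC. pose proof (Complex.Rmax_Cmod (toC z)). unfold toC in *; simpl in *.
  eapply Rle_trans; [|exact H]. apply Rmax_r. Qed.

Lemma Cmod_le_reim z : Cmod z <= Rabs (re z) + Rabs (im z).
Proof.
  unfold Cmod. apply Rsqr_incrst_0 || idtac.
  rewrite <- (sqrt_Rsqr (Rabs (re z) + Rabs (im z))) by (pose proof (Rabs_pos (re z)); pose proof (Rabs_pos (im z)); lra).
  apply sqrt_le_1_alt. unfold Rsqr.
  pose proof (Rabs_pos (re z)); pose proof (Rabs_pos (im z)).
  replace (re z * re z) with (Rabs (re z) * Rabs (re z)) by (rewrite <- Rabs_mult; apply Rabs_pos_eq; nra).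
  replace (im z * im z) with (Rabs (im z) * Rabs (im z)) by (rewrite <- Rabs_mult; apply Rabs_pos_eq; nra).
  nra.
Qed.

Lemma Cmod_C0 : Cmod C0 = 0.
Proof. unfold Cmod, C0; simpl. replace (0*0+0*0) with 0 by ring. apply sqrt_0. Qed.

Definition Cone : C := mkC 1 0.
Lemma Cmod_Cone : Cmod Cone = 1.
Proof. unfold Cmod, Cone; simpl. replace (1*1+0*0) with 1 by ring. apply sqrt_1. Qed.

Lemma Cmod_sub_sym z w : Cmod (Csub z w) = Cmod (Csub w z).
Proof. unfold Cmod, Csub; simpl. f_equal; ring. Qed.

Lemma Cmod_sub_tri z w u : Cmod (Csub z u) <= Cmod (Csub z w) + Cmod (Csub w u).
Proof.
  replace (Csub z u) with (Cadd (Csub z w) (Csub w u)) by (apply C_ext; simpl; ring).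
  apply Cmod_add.
Qed.

Lemma Cmod_sub_le z w : Cmod (Csub z w) <= Cmod z + Cmod w.
Proof.
  replace (Csub z w) with (Cadd z (Cmul (mkC (-1) 0) w)) by (apply C_ext; simpl; ring).
  eapply Rle_trans; [apply Cmod_add|]. rewrite Cmod_mul.
  replace (Cmod (mkC (-1) 0)) with 1. lra.
  unfold Cmod; simpl. replace (-1 * -1 + 0 * 0) with 1 by ring. now rewrite sqrt_1.
Qed.

Lemma Cmod_real r : Cmod (mkC r 0) = Rabs r.
Proof. unfold Cmod; simpl. replace (r*r+0*0) with (r²) by (unfold Rsqr; ring). apply sqrt_Rsqr_abs. Qed.

Definition deq {T : Type} : forall x y : T, {x = y} + {x <> y} :=
  fun x y => excluded_middle_informative (x = y).

Section Sums.
Context {I : Type}.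

Lemma lsum_app (f : I -> C) l1 l2 : lsum f (l1 ++ l2) = Cadd (lsum f l1) (lsum f l2).
Proof. induction l1; simpl. apply C_ext; simpl; ring. rewrite IHl1. apply C_ext; simpl; ring. Qed.

Lemma lsumR_app (f : I -> R) l1 l2 : lsumR f (l1 ++ l2) = lsumR f l1 + lsumR f l2.
Proof. induction l1; simpl. ring. rewrite IHl1. ring. Qed.

Lemma lsum_re (f : I -> C) l : re (lsum f l) = lsumR (fun i => re (f i)) l.
Proof. induction l; simpl; auto. rewrite IHl; auto. Qed.
Lemma lsum_im (f : I -> C) l : im (lsum f l) = lsumR (fun i => im (f i)) l.
Proof. induction l; simpl; auto. rewrite IHl; auto. Qed.

Lemma lsum_Cmod (f : I -> C) l : Cmod (lsum f l) <= lsumR (fun i => Cmod (f i)) l.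
Proof. induction l; simpl. rewrite Cmod_C0; lra.
  eapply Rle_trans; [apply Cmod_add|]. lra. Qed.

Lemma lsumR_nonneg (f : I -> R) l : (forall i, 0 <= f i) -> 0 <= lsumR f l.
Proof. intros H; induction l; simpl. lra. pose proof (H a); lra. Qed.

Lemma lsumR_ext (f g : I -> R) l : (forall i, In i l -> f i = g i) -> lsumR f l = lsumR g l.
Proof. induction l; simpl; intros; auto. rewrite H, IHl; auto. Qed.
Lemma lsum_ext (f g : I -> C) l : (forall i, In i l -> f i = g i) -> lsum f l = lsum g l.
Proof. induction l; simpl; intros; auto. rewrite H, IHl; auto. Qed.

Lemma lsumR_le (f g : I -> R) l : (forall i, f i <= g i) -> lsumR f l <= lsumR g l.
Proof. intros H; induction l; simpl. lra. pose proof (H a); lra. Qed.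

Lemma lsumR_plus (f g : I -> R) l : lsumR (fun i => f i + g i) l = lsumR f l + lsumR g l.
Proof. induction l; simpl. ring. rewrite IHl; ring. Qed.
Lemma lsumR_scal c (f : I -> R) l : lsumR (fun i => c * f i) l = c * lsumR f l.
Proof. induction l; simpl. ring. rewrite IHl; ring. Qed.
Lemma lsum_add (f g : I -> C) l : lsum (fun i => Cadd (f i) (g i)) l = Cadd (lsum f l) (lsum g l).
Proof. induction l; simpl. apply C_ext; simpl; ring. rewrite IHl; apply C_ext; simpl; ring. Qed.
Lemma lsum_scal c (f : I -> C) l : lsum (fun i => Cmul c (f i)) l = Cmul c (lsum f l).
Proof. induction l; simpl. apply C_ext; simpl; ring. rewrite IHl; apply C_ext; simpl; ring. Qed.

Lemma lsumR_incl (f : I -> R) G H : (forall i, 0 <= f i) -> NoDup G -> incl G H ->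
  lsumR f G <= lsumR f H.
Proof.
  intros Hf HG. revert H. induction HG as [|x G Hx HG IH]; intros H Hi; simpl.
  - apply lsumR_nonneg; auto.
  - assert (Hin : In x H) by (apply Hi; left; auto).
    destruct (in_split _ _ Hin) as [H1 [H2 ->]].
    rewrite lsumR_app; simpl.
    assert (Hs : lsumR f G <= lsumR f (H1 ++ H2)).
    { apply IH. intros y Hy. assert (Hy2 : In y (H1 ++ x :: H2)) by (apply Hi; right; auto).
      apply in_app_or in Hy2. apply in_or_app. destruct Hy2 as [H0|[H0|H0]]; auto.
      subst; contradiction. }
    rewrite lsumR_app in Hs. lra.
Qed.

Definition hasR (P : I -> Prop) (f : I -> R) (v : R) : Prop :=
  forall eps, 0 < eps -> exists F0 : list I, Forall P F0 /\
    forall F, NoDup F -> Forall P F -> incl F0 F -> Rabs (lsumR f F - v) <= eps.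

Definition absbdd (P : I -> Prop) (f : I -> R) (M : R) : Prop :=
  forall F, NoDup F -> Forall P F -> lsumR (fun i => Rabs (f i)) F <= M.

Lemma hasR_nonneg P f M : (forall i, 0 <= f i) ->
  (forall F, NoDup F -> Forall P F -> lsumR f F <= M) -> exists v, hasR P f v.
Proof.
  intros Hf HM.
  set (E := fun r => exists F, NoDup F /\ Forall P F /\ r = lsumR f F).
  assert (Hb : bound E) by (exists M; intros r [F [H1 [H2 ->]]]; auto).
  assert (He : exists x, E x) by (exists 0; exists nil; repeat split; constructor).
  destruct (completeness E Hb He) as [m [Hub Hlub]].
  exists m. intros eps Heps.
  destruct (classic (exists F, NoDup F /\ Forall P F /\ m - eps < lsumR f F)) as
    [[F0 [H1 [H2 H3]]]|Hn].
  - exists F0; split; auto. intros F HF HPF Hinc.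
    assert (lsumR f F0 <= lsumR f F) by (apply lsumR_incl; auto).
    assert (lsumR f F <= m) by (apply Hub; exists F; auto).
    apply Rabs_le; lra.
  - exfalso. assert (m <= m - eps); [|lra].
    apply Hlub. intros r [F [H1 [H2 ->]]].
    destruct (Rle_lt_dec (lsumR f F) (m - eps)); auto. exfalso; apply Hn; eauto.
Qed.

Lemma hasR_lin P f g a b va vb : hasR P f va -> hasR P g vb ->
  hasR P (fun i => a * f i + b * g i) (a * va + b * vb).
Proof.
  intros Hf Hg eps Heps.
  set (e := eps / (Rabs a + Rabs b + 1)).
  assert (He : 0 < e) by (unfold e; apply Rdiv_lt_0_compat; auto;
     pose proof (Rabs_pos a); pose proof (Rabs_pos b); lra).
  destruct (Hf e He) as [F1 [HP1 H1]]. destruct (Hg e He) as [F2 [HP2 H2]].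
  exists (F1 ++ F2). split. apply Forall_app; auto.
  intros F HF HPF Hinc.
  assert (A1 := H1 F HF HPF (fun x h => Hinc x (in_or_app _ _ _ (or_introl h)))).
  assert (A2 := H2 F HF HPF (fun x h => Hinc x (in_or_app _ _ _ (or_intror h)))).
  rewrite lsumR_plus, !lsumR_scal.
  replace (a * lsumR f F + b * lsumR g F - (a * va + b * vb)) with
    (a * (lsumR f F - va) + b * (lsumR g F - vb)) by ring.
  eapply Rle_trans; [apply Rabs_triang|]. rewrite !Rabs_mult.
  assert (Rabs a * Rabs (lsumR f F - va) <= Rabs a * e) by (apply Rmult_le_compat_l; auto; apply Rabs_pos).
  assert (Rabs b * Rabs (lsumR g F - vb) <= Rabs b * e) by (apply Rmult_le_compat_l; auto; apply Rabs_pos).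
  assert ((Rabs a + Rabs b) * e <= eps).
  { unfold e. pose proof (Rabs_pos a); pose proof (Rabs_pos b).
    apply (Rmult_le_reg_r (Rabs a + Rabs b + 1)). lra.
    field_simplify; [|lra]. nra. }
  lra.
Qed.

Lemma hasR_ext P f g v : (forall i, P i -> f i = g i) -> hasR P f v -> hasR P g v.
Proof.
  intros Hfg H eps Heps. destruct (H eps Heps) as [F0 [HP HF]]. exists F0; split; auto.
  intros F H1 H2 H3. rewrite <- (lsumR_ext f g). auto.
  intros i Hi. apply Hfg. rewrite Forall_forall in H2; auto.
Qed.

Lemma hasR_abs P f M : absbdd P f M -> exists v, hasR P f v.
Proof.
  intros HM.
  destruct (hasR_nonneg P (fun i => (Rabs (f i) + f i) / 2) M) as [v1 H1].
  { intros i. pose proof (Rle_abs (- f i)). rewrite Rabs_Ropp in H. lra. }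
  { intros F HF HPF. eapply Rle_trans; [|apply (HM F HF HPF)]. apply lsumR_le.
    intros i. pose proof (Rle_abs (f i)). lra. }
  destruct (hasR_nonneg P (fun i => (Rabs (f i) - f i) / 2) M) as [v2 H2].
  { intros i. pose proof (Rle_abs (f i)). lra. }
  { intros F HF HPF. eapply Rle_trans; [|apply (HM F HF HPF)]. apply lsumR_le.
    intros i. pose proof (Rle_abs (- f i)). rewrite Rabs_Ropp in H. lra. }
  exists (1 * v1 + (-1) * v2).
  eapply hasR_ext; [|apply (hasR_lin _ _ _ 1 (-1) _ _ H1 H2)].
  intros i _. simpl. field.
Qed.

Lemma has_sum_of_reim P (f : I -> C) v :
  hasR P (fun i => re (f i)) (re v) -> hasR P (fun i => im (f i)) (im v) -> has_sum P f v.
Proof.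
  intros Hr Hi eps Heps.
  destruct (Hr (eps/2)) as [F1 [HP1 H1]]; [lra|]. destruct (Hi (eps/2)) as [F2 [HP2 H2]]; [lra|].
  exists (F1 ++ F2). split. apply Forall_app; auto.
  intros F HF HPF Hinc.
  assert (A1 := H1 F HF HPF (fun x h => Hinc x (in_or_app _ _ _ (or_introl h)))).
  assert (A2 := H2 F HF HPF (fun x h => Hinc x (in_or_app _ _ _ (or_intror h)))).
  eapply Rle_trans; [apply Cmod_le_reim|]. simpl. rewrite lsum_re, lsum_im. lra.
Qed.

Definition cabsbdd (P : I -> Prop) (f : I -> C) (M : R) : Prop :=
  forall F, NoDup F -> Forall P F -> lsumR (fun i => Cmod (f i)) F <= M.

Lemma has_sum_exists (P : I -> Prop) (f : I -> C) M : cabsbdd P f M -> exists v, has_sum P f v.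
Proof.
  intros H.
  destruct (hasR_abs P (fun i => re (f i)) M) as [v1 H1].
  { intros F HF HPF. eapply Rle_trans; [|apply (H F HF HPF)]. apply lsumR_le. intros; apply Cmod_re. }
  destruct (hasR_abs P (fun i => im (f i)) M) as [v2 H2].
  { intros F HF HPF. eapply Rle_trans; [|apply (H F HF HPF)]. apply lsumR_le. intros; apply Cmod_im. }
  exists (mkC v1 v2). apply has_sum_of_reim; auto.
Qed.

Lemma has_sum_unique (P : I -> Prop) (f : I -> C) v w : has_sum P f v -> has_sum P f w -> v = w.
Proof.
  intros Hv Hw.
  assert (forall eps, 0 < eps -> Cmod (Csub v w) <= eps).
  { intros eps Heps. destruct (Hv (eps/2)) as [F1 [HP1 H1]]; [lra|].
    destruct (Hw (eps/2)) as [F2 [HP2 H2]]; [lra|].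
    set (F := nodup deq (F1 ++ F2)).
    assert (HF : NoDup F) by apply NoDup_nodup.
    assert (HPF : Forall P F).
    { apply Forall_forall; intros x Hx. apply nodup_In in Hx. apply in_app_or in Hx.
      rewrite Forall_forall in HP1, HP2. destruct Hx; auto. }
    assert (A1 := H1 F HF HPF (fun x h => proj2 (nodup_In deq _ _) (in_or_app _ _ _ (or_introl h)))).
    assert (A2 := H2 F HF HPF (fun x h => proj2 (nodup_In deq _ _) (in_or_app _ _ _ (or_intror h)))).
    rewrite Cmod_sub_sym in A1.
    pose proof (Cmod_sub_tri v (lsum f F) w). lra. }
  assert (Cmod (Csub v w) = 0).
  { apply Rle_antisym. apply Rnot_lt_le; intros Hc.
    assert (Hc2 : 0 < Cmod (Csub v w) / 2) by lra.
    pose proof (H _ Hc2). lra. apply Cmod_ge0. }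
  unfold Cmod in H0. apply sqrt_eq_0 in H0; [|nra]. simpl in H0.
  set (a := re v - re w) in H0. set (b := im v - im w) in H0.
  assert (Ha : a * a = 0) by (pose proof (Rle_0_sqr a); pose proof (Rle_0_sqr b); unfold Rsqr in *; lra).
  assert (Hb : b * b = 0) by (pose proof (Rle_0_sqr a); pose proof (Rle_0_sqr b); unfold Rsqr in *; lra).
  apply Rmult_integral in Ha. apply Rmult_integral in Hb.
  apply C_ext; unfold a, b in *; lra.
Qed.

Lemma has_sum_ext (P : I -> Prop) (f g : I -> C) v : (forall i, P i -> f i = g i) -> has_sum P f v -> has_sum P g v.
Proof.
  intros Hfg H eps Heps. destruct (H eps Heps) as [F0 [HP HF]]. exists F0; split; auto.
  intros F H1 H2 H3. rewrite <- (lsum_ext f g). auto.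
  intros i Hi. apply Hfg. rewrite Forall_forall in H2; auto.
Qed.

Lemma has_sum_scal (P : I -> Prop) (f : I -> C) v c : has_sum P f v -> has_sum P (fun i => Cmul c (f i)) (Cmul c v).
Proof.
  intros H eps Heps. destruct (H (eps / (Cmod c + 1))) as [F0 [HP HF]].
  { apply Rdiv_lt_0_compat; auto. pose proof (Cmod_ge0 c); lra. }
  exists F0; split; auto. intros F H1 H2 H3. rewrite lsum_scal.
  replace (Csub (Cmul c (lsum f F)) (Cmul c v)) with (Cmul c (Csub (lsum f F) v)) by (apply C_ext; simpl; ring).
  rewrite Cmod_mul. specialize (HF F H1 H2 H3). pose proof (Cmod_ge0 c).
  pose proof (Cmod_ge0 (Csub (lsum f F) v)).
  apply Rle_trans with ((Cmod c + 1) * (eps / (Cmod c + 1))).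
  nra. right; field; lra.
Qed.

Lemma has_sum_add (P : I -> Prop) (f g : I -> C) v w : has_sum P f v -> has_sum P g w ->
  has_sum P (fun i => Cadd (f i) (g i)) (Cadd v w).
Proof.
  intros Hf Hg eps Heps.
  destruct (Hf (eps/2)) as [F1 [HP1 H1]]; [lra|]. destruct (Hg (eps/2)) as [F2 [HP2 H2]]; [lra|].
  exists (F1 ++ F2). split. apply Forall_app; auto.
  intros F HF HPF Hinc.
  assert (A1 := H1 F HF HPF (fun x h => Hinc x (in_or_app _ _ _ (or_introl h)))).
  assert (A2 := H2 F HF HPF (fun x h => Hinc x (in_or_app _ _ _ (or_intror h)))).
  rewrite lsum_add.
  replace (Csub (Cadd (lsum f F) (lsum g F)) (Cadd v w)) with
    (Cadd (Csub (lsum f F) v) (Csub (lsum g F) w)) by (apply C_ext; simpl; ring).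
  eapply Rle_trans; [apply Cmod_add|]. lra.
Qed.

Lemma has_sum_bound (P : I -> Prop) (f : I -> C) v M : has_sum P f v -> cabsbdd P f M -> Cmod v <= M.
Proof.
  intros H HM. apply Rnot_lt_le; intros Hc.
  destruct (H ((Cmod v - M)/2)) as [F0 [HP HF]]; [lra|].
  set (F := nodup deq F0).
  assert (HFn : NoDup F) by apply NoDup_nodup.
  assert (HPF : Forall P F).
  { apply Forall_forall; intros x Hx. apply nodup_In in Hx. rewrite Forall_forall in HP; auto. }
  specialize (HF F HFn HPF (fun x h => proj2 (nodup_In deq _ _) h)).
  specialize (HM F HFn HPF). pose proof (lsum_Cmod f F).
  pose proof (Cmod_sub_tri v (lsum f F) C0).
  replace (Csub v C0) with v in H1 by (apply C_ext; simpl; ring).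
  replace (Csub (lsum f F) C0) with (lsum f F) in H1 by (apply C_ext; simpl; ring).
  rewrite Cmod_sub_sym in HF. lra.
Qed.

End Sums.

Lemma lsumR_map {A B} (f : B -> R) (g : A -> B) l : lsumR f (map g l) = lsumR (fun a => f (g a)) l.
Proof. induction l; simpl; auto. rewrite IHl; auto. Qed.
Lemma lsum_map {A B} (f : B -> C) (g : A -> B) l : lsum f (map g l) = lsum (fun a => f (g a)) l.
Proof. induction l; simpl; auto. rewrite IHl; auto. Qed.

Lemma lsumR_prod {A B} (f : A -> R) (g : B -> R) la lb :
  lsumR (fun p => f (fst p) * g (snd p)) (list_prod la lb) = lsumR f la * lsumR g lb.
Proof.
  induction la; simpl. ring. rewrite lsumR_app, IHla, lsumR_map. simpl.
  rewrite lsumR_scal. ring.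
Qed.

Lemma pair_bound {A B} (P : A * B -> Prop) (u : A -> C) (w : B -> C) Mu Mw :
  cabsbdd (fun _ => True) u Mu -> cabsbdd (fun _ => True) w Mw ->
  cabsbdd P (fun p => Cmul (u (fst p)) (w (snd p))) (Mu * Mw).
Proof.
  intros Hu Hw F HF _.
  set (la := nodup deq (map fst F)). set (lb := nodup deq (map snd F)).
  assert (Hla : NoDup la) by apply NoDup_nodup. assert (Hlb : NoDup lb) by apply NoDup_nodup.
  assert (T : forall {X} (l : list X), Forall (fun _ => True) l) by (intros; apply Forall_forall; auto).
  eapply Rle_trans.
  - apply (lsumR_incl (fun p => Cmod (Cmul (u (fst p)) (w (snd p)))) F (list_prod la lb)).
    intros; apply Cmod_ge0. auto.
    intros [x y] Hxy. apply in_prod; apply nodup_In.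
    + change x with (fst (x, y)). apply in_map; auto.
    + change y with (snd (x, y)). apply in_map; auto.
  - rewrite (lsumR_ext (fun p => Cmod (Cmul (u (fst p)) (w (snd p)))) (fun p => Cmod (u (fst p)) * Cmod (w (snd p)))) by (intros; apply Cmod_mul).
    rewrite (lsumR_prod (fun a => Cmod (u a)) (fun b => Cmod (w b))).
    pose proof (Hu la Hla (T _ _)). pose proof (Hw lb Hlb (T _ _)).
    pose proof (lsumR_nonneg (fun a => Cmod (u a)) la (fun _ => Cmod_ge0 _)).
    pose proof (lsumR_nonneg (fun a => Cmod (w a)) lb (fun _ => Cmod_ge0 _)).
    apply Rmult_le_compat; auto.
Qed.

Lemma fubini {I J} (P : I -> Prop) (k : I -> J) (h : I -> C) (g : J -> C) T :
  has_sum P h T -> (forall j, has_sum (fun i => P i /\ k i = j) h (g j)) ->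
  has_sum (fun _ => True) g T.
Proof.
  intros HT Hg eps Heps.
  destruct (HT (eps/2)) as [F1 [HP1 H1]]; [lra|].
  exists (map k F1). split. apply Forall_forall; auto.
  intros G HG _ Hinc.
  assert (Claim : forall e, 0 < e -> forall G, NoDup G -> exists E, NoDup E /\ Forall P E /\
     (forall p, In p E -> In (k p) G) /\ (forall p, In p F1 -> In (k p) G -> In p E) /\
     Cmod (Csub (lsum g G) (lsum h E)) <= e * INR (length G)).
  { clear HG Hinc G. intros e He G HG. induction HG as [|j G Hj HG IH].
    - exists nil. split; [constructor|]. split; [constructor|].
      split; [intros p Hp; contradiction|]. split; [intros p Hp Hk; contradiction|].
      simpl. replace (Csub C0 C0) with C0 by (apply C_ext; simpl; ring). rewrite Cmod_C0; lra.
    - destruct IH as [E' [HE'1 [HE'2 [HE'3 [HE'4 HE'5]]]]].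
      destruct (Hg j e He) as [F0 [HP0 H0]].
      set (Ej := nodup deq (F0 ++ filter (fun p => if deq (k p) j then true else false) F1)).
      assert (HEj1 : NoDup Ej) by apply NoDup_nodup.
      assert (HEj2 : forall p, In p Ej -> P p /\ k p = j).
      { intros p Hp. apply nodup_In in Hp. apply in_app_or in Hp. destruct Hp as [Hp|Hp].
        rewrite Forall_forall in HP0; auto.
        apply filter_In in Hp. destruct Hp as [Hp1 Hp2]. destruct (deq (k p) j); try discriminate.
        rewrite Forall_forall in HP1; auto. }
      assert (HEj3 : Cmod (Csub (lsum h Ej) (g j)) <= e).
      { apply H0; auto. apply Forall_forall; auto.
        intros p Hp. apply nodup_In. apply in_or_app; auto. }
      exists (Ej ++ E'). split; [|split; [|split; [|split]]].
      + apply NoDup_app; auto. intros p Hp Hp'. apply HE'3 in Hp'. apply HEj2 in Hp.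
        destruct Hp as [_ Hp]; subst; contradiction.
      + apply Forall_app; split; auto. apply Forall_forall; intros p Hp; apply HEj2; auto.
      + intros p Hp. apply in_app_or in Hp. destruct Hp as [Hp|Hp].
        apply HEj2 in Hp; left; symmetry; tauto. right; auto.
      + intros p Hp Hk. apply in_or_app. destruct Hk as [Hk|Hk].
        * left. apply nodup_In. apply in_or_app. right. apply filter_In. split; auto.
          destruct (deq (k p) j); auto.
        * right; auto.
      + simpl length. rewrite S_INR. simpl lsum. rewrite lsum_app.
        replace (Csub (Cadd (g j) (lsum g G)) (Cadd (lsum h Ej) (lsum h E'))) with
          (Cadd (Csub (g j) (lsum h Ej)) (Csub (lsum g G) (lsum h E'))) by (apply C_ext; simpl; ring).
        eapply Rle_trans; [apply Cmod_add|]. rewrite Cmod_sub_sym. lra. }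
  set (e := eps / 2 / (INR (length G) + 1)).
  assert (He : 0 < e) by (unfold e; apply Rdiv_lt_0_compat; [lra|]; pose proof (pos_INR (length G)); lra).
  destruct (Claim e He G HG) as [E [HE1 [HE2 [HE3 [HE4 HE5]]]]].
  assert (A := H1 E HE1 HE2 (fun p h => HE4 p h (Hinc _ (in_map _ _ _ h)))).
  eapply Rle_trans; [apply (Cmod_sub_tri _ (lsum h E))|].
  assert (e * INR (length G) <= eps / 2).
  { pose proof (pos_INR (length G)).
    assert (e * (INR (length G) + 1) = eps / 2) by (unfold e; field; lra). nra. }
  lra.
Qed.

Lemma reindex {A B} (x : A) (w : B -> C) W :
  has_sum (fun _ => True) w W -> has_sum (fun p : A * B => True /\ fst p = x) (fun p => w (snd p)) W.
Proof.
  intros H eps Heps. destruct (H eps Heps) as [F0 [_ H0]].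
  exists (map (fun y => (x, y)) F0). split.
  { apply Forall_forall. intros p Hp. apply in_map_iff in Hp. destruct Hp as [y [<- _]]. simpl; auto. }
  intros F HF HPF Hinc.
  assert (HND : NoDup (map snd F)).
  { clear Hinc. induction HF as [|p F Hp HF IH]; simpl; constructor.
    - intros Hin. apply in_map_iff in Hin. destruct Hin as [q [Hq1 Hq2]].
      inversion HPF; subst. rewrite Forall_forall in H4. destruct (H4 q Hq2) as [_ Hq].
      destruct H3 as [_ Hpx]. destruct p, q; simpl in *; subst. contradiction.
    - apply IH. inversion HPF; auto. }
  specialize (H0 (map snd F) HND (proj2 (Forall_forall _ _) (fun _ _ => I))).
  rewrite lsum_map in H0. apply H0.
  intros y Hy. assert (In (x, y) F) by (apply Hinc; apply in_map; auto).
  change y with (snd (x, y)). apply in_map; auto.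
Qed.

Lemma prod_sum {A B} (u : A -> C) (w : B -> C) U W Mu Mw :
  cabsbdd (fun _ => True) u Mu -> cabsbdd (fun _ => True) w Mw ->
  has_sum (fun _ => True) u U -> has_sum (fun _ => True) w W ->
  has_sum (fun _ : A * B => True) (fun p => Cmul (u (fst p)) (w (snd p))) (Cmul U W).
Proof.
  intros Hu Hw HU HW.
  destruct (has_sum_exists (fun _ : A * B => True) _ _ (pair_bound _ u w Mu Mw Hu Hw)) as [T HT].
  assert (H1 : has_sum (fun _ => True) (fun x => Cmul (u x) W) T).
  { apply (fubini _ fst _ _ T HT). intros x.
    eapply has_sum_ext; [|apply (has_sum_scal _ _ _ (u x) (reindex x w W HW))].
    intros [a b] [_ Hx]. simpl in *. subst. reflexivity. }
  assert (H2 : has_sum (fun _ => True) (fun x => Cmul (u x) W) (Cmul U W)).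
  { replace (Cmul U W) with (Cmul W U) by (apply C_ext; simpl; ring).
    eapply has_sum_ext; [|apply (has_sum_scal _ _ _ W HU)].
    intros; apply C_ext; simpl; ring. 
  }
  rewrite <- (has_sum_unique _ _ _ _ H1 H2). auto.
Qed.

Definition ptC {I : Type} (q : I) (c : C) : I -> C := fun i => if deq i q then c else C0.
Definition ptR {I : Type} (q : I) (c : R) : I -> R := fun i => if deq i q then c else 0.

Lemma lsum_pt_out {I} (q : I) c F : ~ In q F -> lsum (ptC q c) F = C0.
Proof. induction F; simpl; intros; auto. unfold ptC at 1. destruct (deq a q).
  subst; tauto. rewrite IHF by tauto. apply C_ext; simpl; ring. Qed.

Lemma lsum_pt_in {I} (q : I) c F : NoDup F -> In q F -> lsum (ptC q c) F = c.
Proof. intros H; induction H; simpl; intros Hq; [contradiction|]. unfold ptC at 1. destruct (deq x q).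
  subst. rewrite lsum_pt_out by auto. apply C_ext; simpl; ring.
  destruct Hq; [congruence|]. rewrite IHNoDup by auto. apply C_ext; simpl; ring. Qed.

Lemma lsumR_ptR {I} (q : I) r F : NoDup F -> 0 <= r -> lsumR (ptR q r) F <= r.
Proof.
  intros H Hr. assert (lsumR (ptR q r) F <= r /\ (~ In q F -> lsumR (ptR q r) F = 0)).
  { induction H; simpl. split; lra. destruct IHNoDup as [A B]. unfold ptR at 1 3. destruct (deq x q).
    - subst. rewrite B by auto. split; [lra|]. intros Hn; exfalso; apply Hn; auto.
    - split. lra. intros Hn. rewrite B. lra. tauto. }
  tauto.
Qed.

Lemma Cmod_pt {I} (q : I) c i : Cmod (ptC q c i) = ptR q (Cmod c) i.
Proof. unfold ptC, ptR. destruct (deq i q); auto. apply Cmod_C0. Qed.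

Lemma has_sum_pt_in {I} (P : I -> Prop) q c : P q -> has_sum P (ptC q c) c.
Proof.
  intros Hq eps Heps. exists (q :: nil). split. constructor; auto.
  intros F HF _ Hinc. rewrite lsum_pt_in; auto. 2: apply Hinc; left; auto.
  replace (Csub c c) with C0 by (apply C_ext; simpl; ring). rewrite Cmod_C0; lra.
Qed.

Lemma has_sum_pt_out {I} (P : I -> Prop) q c : ~ P q -> has_sum P (ptC q c) C0.
Proof.
  intros Hq eps Heps. exists nil. split. constructor.
  intros F HF HP _. rewrite lsum_pt_out.
  replace (Csub C0 C0) with C0 by (apply C_ext; simpl; ring). rewrite Cmod_C0; lra.
  intros Hin. rewrite Forall_forall in HP. auto.
Qed.

Lemma epsilon_eq {I} (P : I -> Prop) f v : has_sum P f v ->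
  epsilon (inhabits C0) (fun v => has_sum P f v) = v.
Proof.
  intros H. apply (has_sum_unique P f). apply (epsilon_spec (inhabits C0) (fun v => has_sum P f v)).
  eauto. auto.
Qed.

Lemma has_sum_pred {I} (P Q : I -> Prop) f v : (forall i, P i <-> Q i) -> has_sum P f v -> has_sum Q f v.
Proof.
  intros HPQ H eps Heps. destruct (H eps Heps) as [F0 [H1 H2]]. exists F0. split.
  rewrite Forall_forall in *. intros; apply HPQ; auto.
  intros F HF HQ Hi. apply H2; auto. rewrite Forall_forall in *. intros; apply HPQ; auto.
Qed.

Lemma l1_cabs {I} (a : I -> C) r (P : I -> Prop) : l1_le a r -> cabsbdd P a r.
Proof. intros H F HF _. apply H; auto. Qed.

Lemma l1_le_mono {I} (a b : I -> C) r : (forall i, Cmod (b i) <= Cmod (a i)) -> l1_le a r -> l1_le b r.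
Proof. intros Hab H F HF. eapply Rle_trans; [|apply (H F HF)]. apply lsumR_le; auto. Qed.

Lemma tail_small {I} (a : I -> C) r : l1_le a 1 -> 0 < r -> exists F0, NoDup F0 /\
  forall G, NoDup G -> (forall s, In s G -> ~ In s F0) -> lsumR (fun s => Cmod (a s)) G <= r.
Proof.
  intros Ha Hr.
  set (E := fun x => exists F, NoDup F /\ x = lsumR (fun s => Cmod (a s)) F).
  assert (Hb : bound E) by (exists 1; intros x [F [H1 ->]]; auto).
  assert (He : exists x, E x) by (exists 0; exists nil; split; auto; constructor).
  destruct (completeness E Hb He) as [m [Hub Hlub]].
  destruct (classic (exists F, NoDup F /\ m - r < lsumR (fun s => Cmod (a s)) F)) as [[F0 [H1 H2]]|Hn].
  - exists F0. split; auto. intros G HG Hdis.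
    assert (lsumR (fun s => Cmod (a s)) (F0 ++ G) <= m).
    { apply Hub. exists (F0 ++ G). split; auto. apply NoDup_app; auto.
      intros x Hx Hx'. apply (Hdis x Hx' Hx). }
    rewrite lsumR_app in H. lra.
  - exfalso. assert (m <= m - r); [|lra]. apply Hlub. intros x [F [H1 ->]].
    destruct (Rle_lt_dec (lsumR (fun s => Cmod (a s)) F) (m - r)); auto. exfalso; apply Hn; eauto.
Qed.

Lemma Cmod_le_via z w : Cmod z <= Cmod (Csub z w) + Cmod w.
Proof.
  pose proof (Cmod_sub_tri z w C0).
  replace (Csub z C0) with z in H by (apply C_ext; simpl; ring).
  replace (Csub w C0) with w in H by (apply C_ext; simpl; ring). auto.
Qed.

Lemma dich (t : C) d : 0 <= d -> d <= 1/20 -> Cmod (Csub t (Cmul t t)) <= d ->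
  (1/2 <= Cmod t -> Cmod (Csub t Cone) <= 2 * d) /\ (Cmod t < 1/2 -> Cmod t <= 2 * d).
Proof.
  intros Hd0 Hd H.
  replace (Csub t (Cmul t t)) with (Cmul t (Csub Cone t)) in H by (apply C_ext; simpl; ring).
  rewrite Cmod_mul in H. rewrite Cmod_sub_sym in H.
  pose proof (Cmod_le_via Cone t). rewrite Cmod_Cone, Cmod_sub_sym in H0.
  pose proof (Cmod_ge0 t). pose proof (Cmod_ge0 (Csub t Cone)).
  split; intros; nra.
Qed.

Lemma mult_cases (tx ty txy : C) d : 0 <= d -> d <= 1/20 ->
  Cmod (Csub tx (Cmul tx tx)) <= d -> Cmod (Csub ty (Cmul ty ty)) <= d ->
  Cmod (Csub txy (Cmul tx ty)) <= d ->
  (1/2 <= Cmod txy <-> (1/2 <= Cmod tx /\ 1/2 <= Cmod ty)).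
Proof.
  intros Hd0 Hd Hx Hy Hxy.
  destruct (dich tx d Hd0 Hd Hx) as [Hx1 Hx2]. destruct (dich ty d Hd0 Hd Hy) as [Hy1 Hy2].
  pose proof (Cmod_ge0 tx). pose proof (Cmod_ge0 ty).
  assert (Bx : Cmod tx <= 1 + 2 * d).
  { destruct (Rlt_le_dec (Cmod tx) (1/2)). lra. pose proof (Cmod_le_via tx Cone). rewrite Cmod_Cone in H1.
    specialize (Hx1 r). lra. }
  assert (By : Cmod ty <= 1 + 2 * d).
  { destruct (Rlt_le_dec (Cmod ty) (1/2)). lra. pose proof (Cmod_le_via ty Cone). rewrite Cmod_Cone in H1.
    specialize (Hy1 r). lra. }
  pose proof (Cmod_le_via txy (Cmul tx ty)) as T1. rewrite Cmod_mul in T1.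
  split.
  - intros Hc. split; apply Rnot_lt_le; intro Hn.
    + specialize (Hx2 Hn). assert (Cmod tx * Cmod ty <= 2 * d * (1 + 2 * d)) by
        (apply Rmult_le_compat; auto). nra.
    + specialize (Hy2 Hn). assert (Cmod tx * Cmod ty <= (1 + 2 * d) * (2 * d)) by
        (apply Rmult_le_compat; auto). nra.
  - intros [Ha Hb]. specialize (Hx1 Ha). specialize (Hy1 Hb).
    replace (Csub (Cmul tx ty) Cone) with (Cadd (Cmul tx (Csub ty Cone)) (Csub tx Cone)) by
      (apply C_ext; unfold Cone; simpl; ring) || idtac.
    assert (E : Cmod (Csub (Cmul tx ty) Cone) <= Cmod tx * Cmod (Csub ty Cone) + Cmod (Csub tx Cone)).
    { replace (Csub (Cmul tx ty) Cone) with (Cadd (Cmul tx (Csub ty Cone)) (Csub tx Cone)) by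
        (apply C_ext; unfold Cone; simpl; ring).
      eapply Rle_trans; [apply Cmod_add|]. rewrite Cmod_mul. lra. }
    pose proof (Cmod_sub_tri txy (Cmul tx ty) Cone).
    pose proof (Cmod_le_via Cone txy). rewrite Cmod_Cone, Cmod_sub_sym in H2.
    assert (Cmod tx * Cmod (Csub ty Cone) <= (1 + 2*d) * (2 * d)) by
      (apply Rmult_le_compat; auto; apply Cmod_ge0).
    nra.
Qed.

Lemma conv_pt {S} (op : S -> S -> S) x y :
  conv op (ptC x Cone) (ptC y Cone) = ptC (op x y) Cone.
Proof.
  apply functional_extensionality; intro s. unfold conv. apply epsilon_eq.
  apply (has_sum_ext _ (ptC (x, y) Cone)).
  { intros [p1 p2] _. unfold ptC; simpl.
    destruct (deq (p1, p2) (x, y)) as [E|E]; destruct (deq p1 x); destruct (deq p2 y);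
      try (inversion E; subst; congruence); subst; try congruence;
      apply C_ext; unfold Cone, C0; simpl; ring. }
  unfold ptC at 2. destruct (deq s (op x y)).
  - apply has_sum_pt_in. simpl; auto.
  - apply has_sum_pt_out. simpl; auto.
Qed.

Lemma l1_pt {S} (x : S) c : l1_le (ptC x c) (Cmod c).
Proof.
  intros F HF. rewrite (lsumR_ext _ (ptR x (Cmod c))) by (intros; apply Cmod_pt).
  apply lsumR_ptR; auto. apply Cmod_ge0.
Qed.

Lemma lsumR_filter {I} (f : I -> R) (p : I -> bool) G :
  (forall i, p i = false -> f i = 0) -> lsumR f G = lsumR f (filter p G).
Proof.
  intros H; induction G; simpl; auto. destruct (p a) eqn:E; simpl; rewrite IHG; auto.
  rewrite H; auto. ring.
Qed.

Theorem theoremt (S : Type) (op : S -> S -> S) (hS : is_semilattice op) :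
  l1_AMNM op.
Proof.
  intros eps Heps.
  set (d := Rmin (eps/2) (1/20)).
  assert (Hd0 : 0 < d) by (apply Rmin_pos; lra).
  assert (Hd1 : d <= 1/20) by apply Rmin_r.
  assert (Hd2 : d <= eps/2) by apply Rmin_l.
  exists d. split; auto.
  intros psi [[Hadd Hscal] [M HM]] Hdef eta Heta.
  destruct hS as [_ [_ Hidem]].
  set (e := fun x : S => ptC x Cone).
  set (t := fun x => psi (e x)).
  assert (Hl1e : forall x, l1_le (e x) 1).
  { intros x. rewrite <- Cmod_Cone. apply l1_pt. }
  assert (Hdt : forall x y, Cmod (Csub (t (op x y)) (Cmul (t x) (t y))) <= d).
  { intros x y. unfold t, e. rewrite <- conv_pt. apply Hdef; apply Hl1e. }
  assert (Hid : forall x, Cmod (Csub (t x) (Cmul (t x) (t x))) <= d).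
  { intros x. pose proof (Hdt x x). rewrite Hidem in H. auto. }
  set (inF := fun x => 1/2 <= Cmod (t x)).
  set (chi := fun x => if excluded_middle_informative (inF x) then Cone else C0).
  assert (Hchi_mult : forall x y, chi (op x y) = Cmul (chi x) (chi y)).
  { intros x y. pose proof (mult_cases (t x) (t y) (t (op x y)) d ltac:(lra) Hd1 (Hid x) (Hid y) (Hdt x y)) as Hc.
    unfold chi, inF in *.
    destruct (excluded_middle_informative (1/2 <= Cmod (t (op x y))));
    destruct (excluded_middle_informative (1/2 <= Cmod (t x)));
    destruct (excluded_middle_informative (1/2 <= Cmod (t y))); try tauto;
    apply C_ext; unfold Cone, C0; simpl; ring. }
  assert (Hchi_bd : forall x, Cmod (chi x) <= 1).
  { intros x. unfold chi. destruct (excluded_middle_informative (inF x)).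
    rewrite Cmod_Cone; lra. rewrite Cmod_C0; lra. }
  assert (Hchi_close : forall x, Cmod (Csub (t x) (chi x)) <= 2 * d).
  { intros x. destruct (dich (t x) d ltac:(lra) Hd1 (Hid x)) as [A B].
    unfold chi, inF in *. destruct (excluded_middle_informative (1/2 <= Cmod (t x))).
    auto. replace (Csub (t x) C0) with (t x) by (apply C_ext; simpl; ring). apply B; lra. }
  set (phi := fun a : S -> C => epsilon (inhabits C0)
     (fun v => has_sum (fun _ : S => True) (fun s => Cmul (chi s) (a s)) v)).
  assert (Hcab : forall a r, l1_le a r -> cabsbdd (fun _ => True) (fun s => Cmul (chi s) (a s)) r).
  { intros a r Ha F HF _. eapply Rle_trans; [|apply (Ha F HF)]. apply lsumR_le. intros s.
    rewrite Cmod_mul. pose proof (Hchi_bd s). pose proof (Cmod_ge0 (a s)). pose proof (Cmod_ge0 (chi s)). nra. }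
  assert (Hphi : forall a r, l1_le a r -> has_sum (fun _ => True) (fun s => Cmul (chi s) (a s)) (phi a)).
  { intros a r Ha. unfold phi. apply epsilon_spec.
    apply (has_sum_exists _ _ r). apply Hcab; auto. }
  assert (Hphi_eq : forall a v, has_sum (fun _ => True) (fun s => Cmul (chi s) (a s)) v -> phi a = v).
  { intros a v H. unfold phi. apply epsilon_eq; auto. }
  assert (Hphi_add : forall a b, in_l1 a -> in_l1 b -> phi (fadd a b) = Cadd (phi a) (phi b)).
  { intros a b [ra Ha] [rb Hb]. apply Hphi_eq.
    eapply has_sum_ext; [|apply (has_sum_add _ _ _ _ _ (Hphi a ra Ha) (Hphi b rb Hb))].
    intros s _. unfold fadd. apply C_ext; simpl; ring. }
  assert (Hphi_scal : forall z a, in_l1 a -> phi (fscale z a) = Cmul z (phi a)).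
  { intros z a [ra Ha]. apply Hphi_eq.
    eapply has_sum_ext; [|apply (has_sum_scal _ _ _ z (Hphi a ra Ha))].
    intros s _. unfold fscale. apply C_ext; simpl; ring. }
  assert (Hphi_bd : forall a, l1_le a 1 -> Cmod (phi a) <= 1).
  { intros a Ha. apply (has_sum_bound _ _ _ _ (Hphi a 1 Ha) (Hcab a 1 Ha)). }
  assert (Hphi_mult : forall a b, in_l1 a -> in_l1 b -> phi (conv op a b) = Cmul (phi a) (phi b)).
  { intros a b [ra Ha] [rb Hb]. apply Hphi_eq.
    apply (fubini (fun _ => True) (fun p : S * S => op (fst p) (snd p))
      (fun p => Cmul (Cmul (chi (fst p)) (a (fst p))) (Cmul (chi (snd p)) (b (snd p))))).
    - apply (prod_sum _ _ _ _ ra rb (Hcab a ra Ha) (Hcab b rb Hb) (Hphi a ra Ha) (Hphi b rb Hb)).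
    - intros j.
      assert (Hc : has_sum (fun p : S * S => op (fst p) (snd p) = j)
                     (fun p => Cmul (a (fst p)) (b (snd p))) (conv op a b j)).
      { unfold conv. apply epsilon_spec.
        apply (has_sum_exists _ _ (ra * rb)). apply pair_bound; apply l1_cabs; auto. }
      apply (has_sum_scal _ _ _ (chi j)) in Hc.
      apply (has_sum_pred (fun p : S * S => op (fst p) (snd p) = j)).
      { intros; tauto. }
      eapply has_sum_ext; [|exact Hc].
      intros p Hp. rewrite <- Hp, Hchi_mult. apply C_ext; simpl; ring. }
  exists phi. split.
  { split; [split; [split|]|].
    - apply Hphi_add.
    - apply Hphi_scal.
    - exists 1. apply Hphi_bd.
    - apply Hphi_mult. }
  intros a Ha.
  assert (Hz1 : l1_le (fun _ : S => C0) 1).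
  { intros F _. rewrite (lsumR_ext _ (fun _ => 0)) by (intros; apply Cmod_C0).
    clear. induction F; simpl; lra. }
  assert (HM0 : 0 <= M) by (pose proof (HM _ Hz1); pose proof (Cmod_ge0 (psi (fun _ => C0))); lra).
  set (r := eta / (M + 1)).
  assert (Hr : 0 < r) by (unfold r; apply Rdiv_lt_0_compat; lra).
  destruct (tail_small a r Ha Hr) as [F0 [HF0 Htail]].
  set (rest := fun (L : list S) (s : S) => if excluded_middle_informative (In s L) then a s else C0).
  set (aR := fun s => if excluded_middle_informative (In s F0) then C0 else a s).
  assert (Hsplit : a = fadd (rest F0) aR).
  { apply functional_extensionality; intros s. unfold fadd, rest, aR.
    destruct (excluded_middle_informative (In s F0)); apply C_ext; simpl; ring. }
  assert (Hrest1 : forall L, l1_le (rest L) 1).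
  { intros L. apply (l1_le_mono a); auto. intros s. unfold rest.
    destruct (excluded_middle_informative (In s L)). lra. rewrite Cmod_C0; apply Cmod_ge0. }
  assert (HaR1 : l1_le aR 1).
  { apply (l1_le_mono a); auto. intros s. unfold aR.
    destruct (excluded_middle_informative (In s F0)). rewrite Cmod_C0; apply Cmod_ge0. lra. }
  assert (HaRr : l1_le aR r).
  { intros G HG.
    rewrite (lsumR_filter _ (fun s => if excluded_middle_informative (In s F0) then false else true)).
    - rewrite (lsumR_ext _ (fun s => Cmod (a s))).
      + apply Htail. apply NoDup_filter; auto.
        intros s Hs. apply filter_In in Hs. destruct Hs as [_ Hs].
        destruct (excluded_middle_informative (In s F0)); congruence.
      + intros s Hs. apply filter_In in Hs. destruct Hs as [_ Hs]. unfold aR.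
        destruct (excluded_middle_informative (In s F0)); congruence.
    - intros s Hs. unfold aR. destruct (excluded_middle_informative (In s F0)); try congruence.
      apply Cmod_C0. }
  assert (Hpsi0 : psi (fun _ => C0) = C0).
  { replace (fun _ : S => C0) with (fscale C0 (fun _ : S => C0)) at 1.
    rewrite Hscal. apply C_ext; simpl; ring. exists 1; auto.
    apply functional_extensionality; intros; unfold fscale; apply C_ext; simpl; ring. }
  assert (Hphi0 : phi (fun _ => C0) = C0).
  { replace (fun _ : S => C0) with (fscale C0 (fun _ : S => C0)) at 1.
    rewrite Hphi_scal. apply C_ext; simpl; ring. exists 1; auto.
    apply functional_extensionality; intros; unfold fscale; apply C_ext; simpl; ring. }
  assert (Hphie : forall x, phi (e x) = chi x).
  { intros x. apply Hphi_eq. apply (has_sum_ext _ (ptC x (chi x))).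
    { intros s _. unfold e, ptC. destruct (deq s x) as [Esx|Esx]. rewrite Esx. apply C_ext; unfold Cone; simpl; ring.
      apply C_ext; unfold C0; simpl; ring. }
    apply has_sum_pt_in; auto. }
  assert (Hsce : forall x c, l1_le (fscale c (e x)) (Cmod c)).
  { intros x c. apply (l1_le_mono (ptC x c)). 2: apply l1_pt.
    intros s. unfold fscale, e, ptC. destruct (deq s x).
    replace (Cmul c Cone) with c by (apply C_ext; unfold Cone; simpl; ring). lra.
    replace (Cmul c C0) with C0 by (apply C_ext; unfold C0; simpl; ring). lra. }
  assert (HD : forall L, NoDup L -> Csub (psi (rest L)) (phi (rest L)) =
                lsum (fun x => Cmul (a x) (Csub (t x) (chi x))) L).
  { intros L HL. induction HL as [|x L Hx HL IH].
    - replace (rest nil) with (fun _ : S => C0).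
      rewrite Hpsi0, Hphi0. simpl. apply C_ext; simpl; ring.
      apply functional_extensionality; intros s. unfold rest.
      destruct (excluded_middle_informative (In s nil)); auto. contradiction.
    - assert (Eq : rest (x :: L) = fadd (fscale (a x) (e x)) (rest L)).
      { apply functional_extensionality; intros s. unfold rest, fadd, fscale, e, ptC.
        destruct (deq s x) as [Esx|Esx].
        + rewrite Esx. destruct (excluded_middle_informative (In x (x :: L))) as [i|n]; [|simpl in n; tauto].
          destruct (excluded_middle_informative (In x L)); [contradiction|].
          apply C_ext; unfold Cone, C0; simpl; ring.
        + destruct (excluded_middle_informative (In s (x :: L)));
          destruct (excluded_middle_informative (In s L)); simpl in *;
          try (destruct i; [congruence|contradiction]); try tauto;
          apply C_ext; unfold C0; simpl; ring. }
      rewrite Eq. rewrite Hadd, Hphi_add by (eexists; eauto).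
      rewrite Hscal, Hphi_scal by (eexists; eauto). rewrite Hphie. simpl lsum. rewrite <- IH.
      unfold t. apply C_ext; simpl; ring. }
  assert (HDb : Cmod (Csub (psi (rest F0)) (phi (rest F0))) <= 2 * d).
  { rewrite (HD F0 HF0). eapply Rle_trans; [apply lsum_Cmod|].
    apply Rle_trans with (lsumR (fun x => 2 * d * Cmod (a x)) F0).
    - apply lsumR_le. intros x. rewrite Cmod_mul. pose proof (Hchi_close x).
      pose proof (Cmod_ge0 (a x)). nra.
    - rewrite lsumR_scal. pose proof (Ha F0 HF0). nra. }
  assert (HpsiR : Cmod (psi aR) <= r * M).
  { set (b := fscale (mkC (/ r) 0) aR).
    assert (Hb : l1_le b 1).
    { intros G HG. unfold b, fscale. rewrite (lsumR_ext _ (fun s => / r * Cmod (aR s))).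
      rewrite lsumR_scal. pose proof (HaRr G HG).
      apply Rle_trans with (/ r * r). apply Rmult_le_compat_l; auto.
      left; apply Rinv_0_lt_compat; auto. right; field; lra.
      intros s _. rewrite Cmod_mul, Cmod_real, Rabs_pos_eq; auto.
      left; apply Rinv_0_lt_compat; auto. }
    replace aR with (fscale (mkC r 0) b).
    rewrite Hscal by (exists 1; auto). rewrite Cmod_mul, Cmod_real, Rabs_pos_eq by lra.
    pose proof (HM b Hb). nra.
    apply functional_extensionality; intros s. unfold b, fscale. apply C_ext; simpl; field; lra. }
  assert (HphiR : Cmod (phi aR) <= r).
  { apply (has_sum_bound _ _ _ _ (Hphi aR r HaRr) (Hcab aR r HaRr)). }
  rewrite Hsplit. rewrite Hadd, Hphi_add by (eexists; eauto).
  replace (Csub (Cadd (psi (rest F0)) (psi aR)) (Cadd (phi (rest F0)) (phi aR))) with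
    (Cadd (Csub (psi (rest F0)) (phi (rest F0))) (Csub (psi aR) (phi aR))) by (apply C_ext; simpl; ring).
  eapply Rle_trans; [apply Cmod_add|].
  pose proof (Cmod_sub_le (psi aR) (phi aR)).
  assert (r * M + r = eta) by (unfold r; field; lra).
  lra.
Qed.
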